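(* Let $\mathcal{H}$ be a finite-dimensional Hilbert space, $\mathcal{O}\in\mathcal{L}(\mathcal{H})$ Hermitian, $\rho$ a quantum state on $\mathcal{H}$, $n\geq 1$ and $1\leq k\leq n$. Let \[\mathcal{O}_k=\frac{1}{n!}\sum_{\pi\in\mathfrak{S}_n}U_\pi\,U_{s_k}\,(\mathcal{O}\otimes I^{\otimes n-1})\,U_\pi^\dagger,\qquad T_k=\frac{1}{2\lfloor n/k\rfloor}\sum_{i=0}^{\lfloor n/k\rfloor-1}\left(A_i+A_i^\dagger\right),\] where $A_i=U_{s_{J_i}}\,\big(I^{\otimes ik}\otimes\mathcal{O}\otimes I^{\otimes n-ik-1}\big)$ and $J_i=(ik+1,ik+2,\ldots,ik+k)$. Then $\mathbf{Var}[\mathcal{O}_k]\leq\mathbf{Var}[T_k]$.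
   Context: $\mathfrak{S}_n$ is the symmetric group on $\{1,\ldots,n\}$; for $\pi\in\mathfrak{S}_n$, $U_\pi$ is the unitary on $\mathcal{H}^{\otimes n}$ with $U_\pi\ket{\psi_1}\cdots\ket{\psi_n}=\ket{\psi_{\pi^{-1}(1)}}\cdots\ket{\psi_{\pi^{-1}(n)}}$. $s_k$ is the cyclic shift on the first $k$ elements ($s_k(i)=i+1$ for $i<k$, $s_k(k)=1$, $s_k(i)=i$ for $i>k$). For a sequence $J=(j_1,\ldots,j_l)$ of distinct elements of $\{1,\ldots,n\}$, $s_J\in\mathfrak{S}_n$ maps $j_t\mapsto j_{t+1}$ for $t<l$, $j_l\mapsto j_1$, and fixes all other elements. For a Hermitian $\mathcal{Q}$ on $\mathcal{H}^{\otimes n}$, $\mathbf{Var}[\mathcal{Q}]=\operatorname{tr}(\mathcal{Q}^2\rho^{\otimes n})-\operatorname{tr}(\mathcal{Q}\rho^{\otimes n})^2$, the variance of the outcome of measuring $\rho^{\otimes n}$ with observable $\mathcal{Q}$. *)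

(* Defs.v *)
From HB Require Import structures.
From mathcomp Require Import all_boot all_order all_algebra all_fingroup.
Set Implicit Arguments. Unset Strict Implicit. Unset Printing Implicit Defensive.
Import Order.TTheory GRing.Theory Num.Theory.
Local Open Scope ring_scope.

(* The Hilbert space H is C^d (C an algebraically closed numeric field, e.g.
   the complex numbers).  H^{(x) n} has the product basis indexed by
   functions 'I_n -> 'I_d (site i carries the basis vector x i).
   Sites are numbered 0..n-1 (the paper uses 1..n). *)

Section QOps.
Variable C : numClosedFieldType.
Variables d n : nat.

Definition basis := {ffun 'I_n -> 'I_d}.

(* operators on H^{(x) n}, given by their matrix entries <y|A|x> *)
Definition nop := basis -> basis -> C.

Definition mulop (A B : nop) : nop := fun y x => \sum_(z : basis) A y z * B z x.
Definition adjop (A : nop) : nop := fun y x => (A x y)^*.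
Definition trop (A : nop) : C := \sum_(x : basis) A x x.

Definition tenspow (rho : 'M[C]_d) : nop :=
  fun y x => \prod_(i < n) rho (y i) (x i).

Definition embed (j : nat) (O : 'M[C]_d) : nop :=
  fun y x => \prod_(i < n) (if nat_of_ord i == j then O (y i) (x i)
                            else (y i == x i)%:R).

(* U_s for a permutation s of the sites:
   U_s |x_0 ... x_{n-1}> = |x_{s^-1 0} ... x_{s^-1 (n-1)}>,
   i.e. <y|U_s|x> = 1 iff y = x o s^-1 iff x = y o s. *)
Definition permop (s : 'I_n -> 'I_n) : nop :=
  fun y x => (x == [ffun i => y (s i)])%:R.

(* s_J for J = (a, a+1, ..., a+k-1) (0-based):
   a+t |-> a+t+1 for t < k-1, a+k-1 |-> a, identity elsewhere. *)
Definition shift_on (a k : nat) (i : 'I_n) : 'I_n :=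
  if ((a <= i) && (i < a + k - 1))%N then insubd i i.+1
  else if nat_of_ord i == (a + k - 1)%N then insubd i a
  else i.

Definition var (rho : 'M[C]_d) (Q : nop) : C :=
  trop (mulop (mulop Q Q) (tenspow rho)) - (trop (mulop Q (tenspow rho))) ^+ 2.

Definition Ok (O : 'M[C]_d) (k : nat) : nop :=
  fun y x => (n`!%:R)^-1 * \sum_(pi : 'S_n)
     mulop (mulop (mulop (permop pi) (permop (shift_on 0 k))) (embed 0 O))
           (adjop (permop pi)) y x.

Definition Aop (O : 'M[C]_d) (k i : nat) : nop :=
  mulop (permop (shift_on (i * k) k)) (embed (i * k) O).

Definition Tk (O : 'M[C]_d) (k : nat) : nop :=
  fun y x => ((2 * (n %/ k))%:R)^-1 *
     \sum_(i < n %/ k) (Aop O k i y x + adjop (Aop O k i) y x).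

End QOps.

Definition hermitian_op (C : numClosedFieldType) (d : nat) (A : 'M[C]_d) : Prop :=
  A = map_mx Num.conj (A^T).

Definition is_state (C : numClosedFieldType) (d : nat) (rho : 'M[C]_d) : Prop :=
  [/\ hermitian_op rho,
      (forall v : 'cV[C]_d, 0 <= ((map_mx Num.conj v)^T *m rho *m v) 0 0)
    & \tr rho = 1].
Arguments var {C d} n rho Q.
Arguments Ok {C d} n O k.
Arguments Tk {C d} n O k.

(* Main.v *)
Require Import Defs.
From HB Require Import structures.
From mathcomp Require Import all_boot all_order all_algebra all_fingroup zify ring.
Import Order.TTheory GRing.Theory Num.Theory Num.Def.
Set Implicit Arguments. Unset Strict Implicit. Unset Printing Implicit Defensive.
Local Open Scope ring_scope.

Definition sfn (a k l : nat) : nat :=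
  if ((a <= l) && (l < a + k - 1))%N then l.+1
  else if l == (a + k - 1)%N then a else l.
Definition tfn (a k l : nat) : nat :=
  if (l < k)%N then (l + a)%N else if ((a <= l) && (l < a + k))%N then (l - a)%N else l.
Definition rfn (k l : nat) : nat :=
  if (l < k)%N then (if l == 0%N then (if k == 1%N then 0%N else 1%N)
                    else if l == 1%N then 0%N else (k + 1 - l)%N) else l.

Lemma sfn_spec a k l :
  ((a <= l)%N /\ (l < a + k - 1)%N /\ sfn a k l = l.+1) \/
  (~ ((a <= l)%N /\ (l < a + k - 1)%N) /\ l = (a + k - 1)%N /\ sfn a k l = a) \/
  (~ ((a <= l)%N /\ (l < a + k - 1)%N) /\ l <> (a + k - 1)%N /\ sfn a k l = l).
Proof. rewrite /sfn; case: ifP => H; [|case: ifP => H']; rewrite /=; lia. Qed.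

Lemma tfn_spec a k l :
  ((l < k)%N /\ tfn a k l = (l + a)%N) \/
  ((k <= l)%N /\ (a <= l)%N /\ (l < a + k)%N /\ tfn a k l = (l - a)%N) \/
  ((k <= l)%N /\ ~ ((a <= l)%N /\ (l < a + k)%N) /\ tfn a k l = l).
Proof. rewrite /tfn; case: ifP => H; [|case: ifP => H']; rewrite /=; lia. Qed.

Lemma rfn_spec k l :
  ((l < k)%N /\ l = 0%N /\ k = 1%N /\ rfn k l = 0%N) \/
  ((l < k)%N /\ l = 0%N /\ k <> 1%N /\ rfn k l = 1%N) \/
  ((l < k)%N /\ l = 1%N /\ rfn k l = 0%N) \/
  ((l < k)%N /\ l <> 0%N /\ l <> 1%N /\ rfn k l = (k + 1 - l)%N) \/
  ((k <= l)%N /\ rfn k l = l).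
Proof. rewrite /rfn; case: ifP => H; [case: ifP => H1; [case: ifP => H2|case: ifP => H2]|]; rewrite /=; lia. Qed.

Lemma rf_shift_nat k l : (0 < k)%N -> sfn 0 k (rfn k (sfn 0 k l)) = rfn k l.
Proof.
move=> k1; have := sfn_spec 0 k l; have := rfn_spec k (sfn 0 k l);
have := rfn_spec k l; have := sfn_spec 0 k (rfn k (sfn 0 k l)). lia.
Qed.

Lemma rf_shift0_nat k : (0 < k)%N -> rfn k (sfn 0 k 0) = 0%N.
Proof.
move=> k1; have := sfn_spec 0 k 0; have := rfn_spec k (sfn 0 k 0). lia.
Qed.

Section Ops.
Variable C : numClosedFieldType.
Variables d n : nat.
Local Notation bT := (basis d n).
Local Notation nopT := (nop C d n).

Definition cb (s : 'I_n -> 'I_n) (y : bT) : bT := [ffun i => y (s i)].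

Lemma shift_val a k (l : 'I_n) : (1 <= k)%N -> (a + k <= n)%N ->
  val (shift_on a k l) = sfn a k l.
Proof.
move=> k1 akn; rewrite /shift_on /sfn; have ln := ltn_ord l.
case: ifP => H1; first by rewrite insubdK //; lia.
case: ifP => H2; last by [].
by rewrite insubdK //; lia.
Qed.

Definition tauf (a k : nat) (l : 'I_n) : 'I_n := insubd l (tfn a k l).
Lemma tauf_val a k l : (a + k <= n)%N -> val (tauf a k l) = tfn a k l.
Proof.
move=> akn; rewrite /tauf insubdK //; have ln := ltn_ord l.
have := tfn_spec a k l; rewrite /=; lia.
Qed.

Definition rf (k : nat) (l : 'I_n) : 'I_n := insubd l (rfn k l).
Lemma rf_val k l : (k <= n)%N -> val (rf k l) = rfn k l.
Proof.
move=> kn; rewrite /rf insubdK //; have ln := ltn_ord l.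
have := rfn_spec k l; rewrite /=; lia.
Qed.

Section Blocks.
Variables (a k : nat).
Hypotheses (k1 : (1 <= k)%N) (akn : (a + k <= n)%N) (ha : a = 0%N \/ (k <= a)%N).

Lemma tauf_invol : involutive (tauf a k).
Proof.
move=> l; apply: val_inj; rewrite !tauf_val //.
have := tfn_spec a k l; have := tfn_spec a k (tfn a k l); rewrite /=; rewrite /=; lia.
Qed.

Lemma tauf_inj : injective (tauf a k).
Proof. exact: inv_inj tauf_invol. Qed.

Lemma tauf_shift l : tauf a k (shift_on 0 k l) = shift_on a k (tauf a k l).
Proof.
have kn : (0 + k <= n)%N by lia.
apply: val_inj; rewrite tauf_val // !shift_val // tauf_val //.
have := sfn_spec 0 k l; have := tfn_spec a k (sfn 0 k l);
have := tfn_spec a k l; have := sfn_spec a k (tfn a k l); rewrite /=; lia.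
Qed.
End Blocks.

Section Refl.
Variables (k : nat).
Hypotheses (k1 : (1 <= k)%N) (kn : (k <= n)%N).

Lemma rf_invol : involutive (rf k).
Proof.
move=> l; apply: val_inj; rewrite !rf_val //.
have := rfn_spec k l; have := rfn_spec k (rfn k l); have := ltn_ord l; rewrite /=; rewrite /=; lia.
Qed.

Lemma shift0_inj : injective (@shift_on n 0 k).
Proof.
have kn' : (0 + k <= n)%N by lia.
move=> l l' H; apply: val_inj; move: (congr1 val H); rewrite !shift_val //.
have := sfn_spec 0 k l; have := sfn_spec 0 k l'; rewrite /=; lia.
Qed.

Lemma rf_shift (l : 'I_n) : shift_on 0 k (rf k (shift_on 0 k l)) = rf k l.
Proof.
have kn' : (0 + k <= n)%N by lia.
apply: val_inj; rewrite shift_val // !rf_val // shift_val //.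
exact: rf_shift_nat.
Qed.

Lemma rf_shift0 (j0 : 'I_n) : val j0 = 0%N -> rf k (shift_on 0 k j0) = j0.
Proof.
have kn' : (0 + k <= n)%N by lia.
move=> Hj; apply: val_inj; rewrite rf_val // shift_val //= Hj.
exact: rf_shift0_nat.
Qed.
End Refl.
End Ops.

Section Ops2.
Variable C : numClosedFieldType.
Variables d n : nat.
Local Notation bT := (basis d n).
Local Notation nopT := (nop C d n).

Lemma cbE (s : 'I_n -> 'I_n) (y : bT) i : cb s y i = y (s i).
Proof. by rewrite ffunE. Qed.

Lemma cb_inj (p : 'S_n) : injective (@cb d n p).
Proof.
move=> y z /ffunP H; apply/ffunP => i; have := H (p^-1 i)%g.
by rewrite !ffunE permKV.
Qed.

Lemma sum_cb (p : 'S_n) (F : bT -> C) : \sum_y F (cb p y) = \sum_y F y.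
Proof. by rewrite [RHS](reindex_inj (@cb_inj p)). Qed.

Lemma cb_comp (p q : 'S_n) (y : bT) : cb p (cb q y) = cb (p * q)%g y.
Proof. by apply/ffunP => i; rewrite !ffunE permM. Qed.

Lemma mul_permop_l s (A : nopT) y x : mulop (permop C s) A y x = A (cb s y) x.
Proof.
rewrite /mulop (bigD1 (cb s y)) //= /permop eqxx mul1r big1 ?addr0 // => z.
by move=> /negbTE; rewrite /cb => ->; rewrite mul0r.
Qed.

Lemma mul_adjperm_r s (A : nopT) y x : mulop A (adjop (permop C s)) y x = A y (cb s x).
Proof.
rewrite /mulop (bigD1 (cb s x)) //= /adjop /permop eqxx conjC_nat mulr1 big1 ?addr0 // => z.
by move=> /negbTE Hz; rewrite /cb; rewrite /cb in Hz; rewrite Hz conjC_nat mulr0.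
Qed.

Definition Fop (O : 'M[C]_d) (s : 'I_n -> 'I_n) (j : nat) : nopT :=
  fun y x => \prod_(l < n) (if (l : nat) == j then O (y (s l)) (x l)
                            else (y (s l) == x l)%:R).

Lemma Aop_F O k i y x : Aop O k i y x = Fop O (shift_on (i * k) k) (i * k) y x.
Proof.
rewrite /Aop mul_permop_l /embed /Fop; apply: eq_bigr => l _; by rewrite ffunE.
Qed.

Lemma Fop_conj O s s' (t : 'I_n -> 'I_n) (j0 : 'I_n) (j' : nat) :
  injective t -> (t j0 : nat) = j' -> (forall l, t (s l) = s' (t l)) ->
  forall y x, Fop O s' j' y x = Fop O s j0 (cb t y) (cb t x).
Proof.
move=> ti tj ts y x; rewrite /Fop (reindex_inj ti); apply: eq_bigr => l _.
rewrite !ffunE ts.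
have -> : ((t l : nat) == j') = ((l : nat) == j0).
  by rewrite -tj !(inj_eq val_inj) (inj_eq ti).
by [].
Qed.

Lemma herm_entry (O : 'M[C]_d) : hermitian_op O -> forall a b, (O a b)^* = O b a.
Proof.
move=> H a b; have := congr1 (fun M : 'M[C]_d => M b a) H; rewrite /= !mxE => E.
by rewrite E.
Qed.

Lemma Fop_adj O s (r : 'I_n -> 'I_n) (j0 : 'I_n) : hermitian_op O ->
  injective (fun l => r (s l)) -> r (s j0) = j0 -> (forall l, s (r (s l)) = r l) ->
  forall y x, (Fop O s j0 x y)^* = Fop O s j0 (cb r y) (cb r x).
Proof.
move=> hO phi_inj rsj srs y x.
rewrite /Fop rmorph_prod /= (reindex_inj phi_inj); apply: eq_bigr => l _ /=.
rewrite !ffunE srs.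
have -> : ((r (s l) : nat) == j0) = ((l : nat) == j0).
  rewrite !(inj_eq val_inj); apply/eqP/eqP => [H|->//].
  by apply: phi_inj; rewrite /= H rsj.
case: ifP => _; first by rewrite herm_entry.
by rewrite conjC_nat eq_sym.
Qed.

Definition Sym (X : nopT) : nopT := fun y x => \sum_(p : 'S_n) X (cb p y) (cb p x).

Lemma Sym_conj (X : nopT) (t : 'S_n) y x :
  \sum_(p : 'S_n) X (cb t (cb p y)) (cb t (cb p x)) = Sym X y x.
Proof.
rewrite /Sym; under eq_bigr do rewrite !cb_comp.
by rewrite [RHS](reindex_inj (mulgI t)).
Qed.

End Ops2.

Section SymSec.
Variable C : numClosedFieldType.
Variables d n k : nat.
Variable O : 'M[C]_d.
Hypotheses (hO : hermitian_op O) (n1 : (0 < n)%N) (k1 : (1 <= k)%N) (kn : (k <= n)%N).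
Local Notation bT := (basis d n).
Local Notation nopT := (nop C d n).
Local Notation A0 := (@Aop C d n O k 0).
Let j0 : 'I_n := Ordinal n1.

Lemma cb_perm (f : 'I_n -> 'I_n) (fi : injective f) (y : bT) : cb (perm fi) y = cb f y.
Proof. by apply/ffunP => l; rewrite !ffunE permE. Qed.

Lemma SA_i i y x : (i < n %/ k)%N -> Sym (@Aop C d n O k i) y x = Sym A0 y x.
Proof.
move=> ilt; set a := (i * k)%N.
have akn : (a + k <= n)%N.
  have : (i.+1 * k <= n %/ k * k)%N by rewrite leq_mul2r ilt orbT.
  have := leq_trunc_div n k; rewrite /a mulSn; lia.
have ha : a = 0%N \/ (k <= a)%N.
  rewrite /a; case: (i) => [|i']; [by left|right; rewrite mulSn; lia].
have ti := tauf_inj k1 akn ha.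
rewrite -(Sym_conj A0 (perm ti)) /Sym; apply: eq_bigr => p _.
rewrite !cb_perm Aop_F (@Fop_conj C d n O (shift_on 0 k) _ (tauf a k) j0 a ti).
- by rewrite Aop_F mul0n.
- by rewrite tauf_val //= /tfn k1 add0n.
- by move=> l; rewrite tauf_shift.
Qed.

Lemma rf_inj' : injective (@rf n k).
Proof. exact: inv_inj (rf_invol k1 kn). Qed.

Lemma S0_herm y x : (Sym A0 x y)^* = Sym A0 y x.
Proof.
have phi_inj : injective (fun l => rf k (@shift_on n 0 k l)).
  by apply: inj_comp; [exact: rf_inj' | exact: shift0_inj].
rewrite -(Sym_conj A0 (perm rf_inj') y x) /Sym rmorph_sum; apply: eq_bigr => p _.
rewrite !cb_perm !Aop_F mul0n.
apply: (@Fop_adj C d n O (shift_on 0 k) (rf k) j0 hO phi_inj).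
- by apply: rf_shift0.
- by move=> l; apply: rf_shift.
Qed.

Lemma Tk_sym y x : Sym (Tk n O k) y x = Sym A0 y x.
Proof.
have m0 : (0 < n %/ k)%N by rewrite divn_gt0 //; lia.
rewrite /Sym /Tk -mulr_sumr exchange_big /=.
under eq_bigr => i _ do rewrite big_split /=.
under eq_bigr => i _.
  rewrite (_ : \sum_(p : 'S_n) _ = Sym (Aop O k i) y x) //.
  rewrite (_ : \sum_(p : 'S_n) _ = (Sym (Aop O k i) x y)^*); last first.
    by rewrite /Sym rmorph_sum.
  rewrite !SA_i // S0_herm.
  over.
rewrite sumr_const card_ord -mulr2n -mulrnA -(mulr_natr (Sym A0 y x)) mulrC mulfK //.
rewrite pnatr_eq0 muln_eq0 negb_or /=; lia.
Qed.

Lemma Ok_sym y x : Ok n O k y x = (n`!%:R)^-1 * Sym (Tk n O k) y x.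
Proof.
rewrite Tk_sym /Ok /Sym; congr (_ * _); apply: eq_bigr => p _.
rewrite mul_adjperm_r {1}/mulop.
by under eq_bigr do rewrite mul_permop_l.
Qed.

End SymSec.

Section TrSec.
Variable C : numClosedFieldType.
Variables d n : nat.
Local Notation bT := (basis d n).
Local Notation nopT := (nop C d n).

Lemma P_inv (rho : 'M[C]_d) (p : 'S_n) y x :
  tenspow rho (cb p y) (cb p x) = tenspow rho y x.
Proof.
rewrite /tenspow [RHS](reindex_inj (@perm_inj _ p)); apply: eq_bigr => i _.
by rewrite !ffunE.
Qed.

Lemma double_sum (p : 'S_n) (G : bT -> bT -> C) :
  \sum_y \sum_z G (cb p y) (cb p z) = \sum_y \sum_z G y z.
Proof.
transitivity (\sum_y \sum_z G (cb p y) z).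
  by apply: eq_bigr => y _; exact: (sum_cb p (G (cb p y))).
exact: (sum_cb p (fun y => \sum_z G y z)).
Qed.

Lemma trP_cop (rho : 'M[C]_d) (p : 'S_n) (A B : nopT) :
  (forall y z, A y z = B (cb p y) (cb p z)) ->
  trop (mulop A (tenspow rho)) = trop (mulop B (tenspow rho)).
Proof.
move=> H; rewrite /trop /mulop.
transitivity (\sum_y \sum_z B (cb p y) (cb p z) * tenspow rho (cb p z) (cb p y)).
  by apply: eq_bigr => y _; apply: eq_bigr => z _; rewrite H P_inv.
exact: (double_sum p (fun y z => B y z * tenspow rho z y)).
Qed.

Lemma mulop_cop (p : 'S_n) (X Y : nopT) y x :
  mulop (fun a b => X (cb p a) (cb p b)) (fun a b => Y (cb p a) (cb p b)) y x
  = mulop X Y (cb p y) (cb p x).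
Proof. rewrite /mulop; exact: (sum_cb p (fun w => X (cb p y) w * Y w (cb p x))). Qed.

Definition toM (A : nopT) : 'M[C]_#|bT| := \matrix_(i, j) A (enum_val i) (enum_val j).

Lemma sum_ev (F : bT -> C) : \sum_z F z = \sum_(i < #|bT|) F (enum_val i).
Proof. by rewrite -big_enum_val. Qed.

Lemma toM_mul A B : toM (mulop A B) = toM A *m toM B.
Proof.
apply/matrixP => i j; rewrite !mxE /mulop sum_ev; apply: eq_bigr => l _.
by rewrite !mxE.
Qed.

Lemma trop_toM A : trop A = \tr (toM A).
Proof. rewrite /trop /mxtrace sum_ev; apply: eq_bigr => i _; by rewrite mxE. Qed.

Lemma var_toM rho Q : var n rho Q =
  \tr (toM Q *m toM Q *m toM (tenspow rho)) - \tr (toM Q *m toM (tenspow rho)) ^+ 2.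
Proof. by rewrite /var !trop_toM !toM_mul. Qed.

Lemma tens_decomp (rho B : 'M[C]_d) :
  (forall a b, rho a b = \sum_j (B j a)^* * B j b) ->
  forall y x, tenspow rho y x =
   \sum_(f : {ffun 'I_n -> 'I_d}) (\prod_i B (f i) (y i))^* * \prod_i B (f i) (x i).
Proof.
move=> hB y x; rewrite /tenspow.
under eq_bigr do rewrite hB.
rewrite bigA_distr_bigA; apply: eq_bigr => f _.
by rewrite rmorph_prod -big_split.
Qed.

End TrSec.

Lemma reorder4 (C : numClosedFieldType) (I1 I2 I3 I4 : finType) (F : I1 -> I2 -> I3 -> I4 -> C) :
  \sum_i \sum_a \sum_b \sum_f F i a b f = \sum_b \sum_f \sum_a \sum_i F i a b f.
Proof.
rewrite exchange_big /=.
under eq_bigr => a _ do rewrite exchange_big /=.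
under eq_bigr => a _ do under eq_bigr => b _ do rewrite exchange_big /=.
rewrite exchange_big /=.
by under eq_bigr => b _ do rewrite exchange_big /=.
Qed.

Lemma psd_tr (C : numClosedFieldType) m (Y P : 'M[C]_m) (I : finType) (V : I -> 'I_m -> C) :
  (forall i j, Y i j = (Y j i)^*) -> (forall a b, P a b = \sum_f (V f a)^* * V f b) ->
  0 <= \tr (Y *m Y *m P).
Proof.
move=> hY hP.
have -> : \tr (Y *m Y *m P) =
    \sum_b \sum_f (\sum_i Y i b * V f i)^* * (\sum_i Y i b * V f i).
  rewrite /mxtrace.
  transitivity (\sum_i \sum_a \sum_b \sum_f (Y i b * Y b a) * ((V f a)^* * V f i)).
    apply: eq_bigr => i _; rewrite mxE; apply: eq_bigr => a _.
    rewrite mxE hP mulr_suml; apply: eq_bigr => b _; by rewrite mulr_sumr.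
  transitivity (\sum_b \sum_f \sum_a \sum_i (Y b a * (V f a)^*) * (Y i b * V f i)).
    rewrite reorder4; apply: eq_bigr => b _; apply: eq_bigr => f _.
    apply: eq_bigr => a _; apply: eq_bigr => i _; ring.
  apply: eq_bigr => b _; apply: eq_bigr => f _.
  rewrite rmorph_sum mulr_suml; apply: eq_bigr => a _.
  by rewrite rmorphM /= -hY mulr_sumr.
apply: sumr_ge0 => b _; apply: sumr_ge0 => f _.
by rewrite mulrC mul_conjC_ge0.
Qed.

Local Open Scope sesquilinear_scope.
Lemma rho_decomp (C : numClosedFieldType) (d : nat) (rho : 'M[C]_d) :
  is_state rho -> exists B : 'M[C]_d, forall a b, rho a b = \sum_j (B j a)^* * B j b.
Proof.
case=> Hh Hpsd _.
have Hn : rho \is normalmx by apply/normalmxP; rewrite -Hh.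
set M := spectralmx rho; set D := spectral_diag rho.
have MU : M \is unitarymx by apply: spectral_unitarymx.
have E : rho = M^t* *m diag_mx D *m M.
  by rewrite {1}(orthomx_spectralP Hn) invmx_unitary.
have MM : M *m M^t* = 1%:M by apply/unitarymxP.
have D_ge0 : forall j, 0 <= D 0 j.
  move=> j; have := Hpsd (M^t* *m delta_mx j 0).
  have ce : map_mx Num.conj (delta_mx j 0 : 'cV[C]_d) = delta_mx j 0.
    by apply/matrixP => a b; rewrite !mxE conjC_nat.
  have cM : map_mx Num.conj (M^t*) = M^T.
    by apply/matrixP => a b; rewrite !mxE conjCK.
  rewrite map_mxM ce cM trmx_mul trmxK E !mulmxA.
  rewrite -[_ *m M *m M^t*]mulmxA MM mulmx1.
  rewrite -[_ *m M *m M^t*]mulmxA MM mulmx1.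
  rewrite mul_mx_diag !mxE (bigD1 j) //= big1 ?addr0.
    by rewrite !mxE !eqxx /= mulr1 mul1r.
  by move=> l /negbTE Hl; rewrite !mxE Hl /= mul0r mulr0.
exists (\matrix_(j, a) (sqrtC (D 0 j) * M j a)) => a b.
rewrite {1}E mul_mx_diag !mxE; apply: eq_bigr => j _; rewrite !mxE.
rewrite rmorphM /= (geC0_conj (x := sqrtC _)) ?sqrtC_ge0 //.
rewrite -[in LHS](sqrtCK (D 0 j)); ring.

Qed.
Local Close Scope sesquilinear_scope.

Lemma Tk_herm (C : numClosedFieldType) d n k (O : 'M[C]_d) (y x : basis d n) :
  Tk n O k y x = (Tk n O k x y)^*.
Proof.
rewrite /Tk rmorphM rmorph_sum /= fmorphV /= rmorph_nat; congr (_ * _).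
apply: eq_bigr => i _; by rewrite rmorphD /adjop /= conjCK addrC.
Qed.

Theorem lemma2p18 (C : numClosedFieldType) (d n k : nat)
  (O rho : 'M[C]_d) :
  hermitian_op O -> is_state rho ->
  (1 <= n)%N -> (1 <= k <= n)%N ->
  var n rho (Ok n O k) <= var n rho (Tk n O k).
Proof.
move=> hO hrho n1 /andP[k1 kn].
have [B hB] := rho_decomp hrho.
rewrite !var_toM.
set P := toM (tenspow rho).
set T := toM (Tk n O k).
set Om := toM (Ok n O k).
pose X (p : 'S_n) := toM (fun y x => Tk n O k (cb p y) (cb p x)).
set c : C := n`!%:R.
have c0 : c != 0 by rewrite pnatr_eq0 -lt0n fact_gt0.
have hX : \sum_p X p = c *: Om.
  apply/matrixP => i j; rewrite summxE !mxE Ok_sym // mulrA divff // mul1r.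
  by apply: eq_bigr => p _; rewrite mxE.
have trX1 : forall p, \tr (X p *m P) = \tr (T *m P).
  by move=> p; rewrite -!toM_mul -!trop_toM; apply: (@trP_cop C d n rho p).
have trX2 : forall p, \tr (X p *m X p *m P) = \tr (T *m T *m P).
  move=> p; rewrite -!toM_mul -!trop_toM; apply: (@trP_cop C d n rho p) => y z.
  exact: mulop_cop.
have hXh : forall p i j, X p i j = (X p j i)^*.
  by move=> p i j; rewrite !mxE Tk_herm.
have hOm : forall i j, Om i j = (Om j i)^*.
  move=> i j.
  have : (c *: Om) i j = ((c *: Om) j i)^*.
    by rewrite -hX !summxE rmorph_sum; apply: eq_bigr => p _; rewrite hXh.
  rewrite !mxE rmorphM /= rmorph_nat => /(mulfI c0).
  done.
have hP : forall a b, P a b = \sum_(f : {ffun 'I_n -> 'I_d})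
   (\prod_l B (f l) (enum_val a l))^* * \prod_l B (f l) (enum_val b l).
  by move=> a b; rewrite mxE (tens_decomp hB).
have E1 : \tr (Om *m P) = \tr (T *m P).
  have -> : Om = c^-1 *: \sum_p X p by rewrite hX scalerA mulVf // scale1r.
  rewrite -scalemxAl mxtraceZ mulmx_suml raddf_sum /=.
  under eq_bigr do rewrite trX1.
  by rewrite sumr_const card_Sn -mulr_natr -/c mulrC mulfK.
have E2 : \sum_p \tr ((X p - Om) *m (X p - Om) *m P) =
          c * (\tr (T *m T *m P) - \tr (Om *m Om *m P)).
  transitivity (\sum_p (\tr (X p *m X p *m P) - \tr (X p *m Om *m P)
                 - \tr (Om *m X p *m P) + \tr (Om *m Om *m P))).
    apply: eq_bigr => p _.
    rewrite !mulmxBl !mulmxBr !mulmxBl !raddfB /=.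
    by rewrite opprK addrA.
  rewrite big_split /= !sumrB /=.
  under eq_bigr do rewrite trX2.
  rewrite !sumr_const card_Sn -!raddf_sum /= -!mulmx_suml -!mulmx_sumr hX.
  rewrite -scalemxAl -scalemxAr -scalemxAl !mxtraceZ.
  rewrite -(mulr_natr (\tr (T *m T *m P))) -(mulr_natr (\tr (Om *m Om *m P))) -/c.
  by rewrite [\tr (T *m T *m P) * c]mulrC [\tr (Om *m Om *m P) * c]mulrC mulrBr subrK.
have key : 0 <= \tr (T *m T *m P) - \tr (Om *m Om *m P).
  have : 0 <= c^-1 * \sum_p \tr ((X p - Om) *m (X p - Om) *m P).
    apply: mulr_ge0; first by rewrite invr_ge0 ler0n.
    apply: sumr_ge0 => p _; apply: (psd_tr _ hP).
    move=> i j; rewrite !mxE rmorphB /= -Tk_herm; congr (_ - _).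
    by have := hOm i j; rewrite !mxE.
  by rewrite E2 mulKf.
rewrite E1 lerD2r -subr_ge0; exact: key.
Qed.
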